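(* Let $\mathbb{F}$ be a distribution, $n\in\mathbb{N}$, and $\hat\rho_n$ a risk estimator such that $\hat\rho_n(\boldsymbol{X})$ is bounded and non-negative and $\rho_{\mathbb{F}}(S(c))$ is finite for all $c\ge0$. Then the function $c\mapsto\rho_{\mathbb{F}}(S(c))$ is non-increasing and continuous on $[0,\infty)$, with $|\rho_{\mathbb{F}}(S(c))-\rho_{\mathbb{F}}(S(c'))|\le |c-c'|\,\|\hat\rho_n(\boldsymbol{X})\|_{\sup}$. Consequently, if $c^*_{\mathbb{F}}\in(0,\infty)$, then the optimally scaled estimator $c^*_{\mathbb{F}}\hat\rho_n$ is risk unbiased under $\mathbb{F}$, i.e. $$\rho_{\mathbb{F}}\big(X+c^*_{\mathbb{F}}\,\hat\rho_n(\boldsymbol{X})\big)=0.$$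
   Context: Setting: on a probability space, $X$ is a real random variable and $\boldsymbol{X}=(X_1,\dots,X_n)$ a sample independent of $X$, with $X,X_1,\dots,X_n$ i.i.d. with distribution $\mathbb{F}$. $\rho$ is a monetary risk measure (monotone: $X\le Y\Rightarrow\rho(X)\ge\rho(Y)$; cash invariant: $\rho(X+m)=\rho(X)-m$), positively homogeneous and law-invariant; $\rho_{\mathbb{F}}$ denotes $\rho$ evaluated under the law induced by $\mathbb{F}$. A risk estimator is a measurable $\hat\rho_n\colon\mathbb{R}^n\to\mathbb{R}$ that is cash invariant ($\hat\rho_n(\boldsymbol{x}+m)=\hat\rho_n(\boldsymbol{x})-m$) and positively homogeneous ($\hat\rho_n(\lambda\boldsymbol{x})=\lambda\hat\rho_n(\boldsymbol{x})$, $\lambda\ge0$). $S(c):=X+c\,\hat\rho_n(\boldsymbol{X})$ and $c^*_{\mathbb{F}}:=\inf\{c>0:\rho_{\mathbb{F}}(S(c))\le0\}$ with $\inf\emptyset=\infty$. $\|\cdot\|_{\sup}$ is the essential supremum norm. *)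

(* Defs.v *)
From HB Require Import structures.
From mathcomp Require Import all_boot all_order all_algebra.
From mathcomp Require Import all_classical all_reals all_analysis ess_sup_inf.
Set Implicit Arguments. Unset Strict Implicit. Unset Printing Implicit Defensive.
Import Order.TTheory GRing.Theory Num.Theory.
Import numFieldNormedType.Exports.
Local Open Scope classical_set_scope.
Local Open Scope ring_scope.

Definition mutually_independent d (T : measurableType d) (R : realType)
  (P : probability T R) (I : finType) (Y : I -> T -> R) : Prop :=
  forall B : I -> set R, (forall i, measurable (B i)) ->
    P (\bigcap_(i in [set: I]) (Y i @^-1` B i)) =
    (\prod_(i : I) P (Y i @^-1` B i))%E.

Definition has_law d (T : measurableType d) (R : realType)
  (P : probability T R) (Y : T -> R) (F : probability R R) : Prop :=
  forall A : set R, measurable A -> P (Y @^-1` A) = F A.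

Definition monetary_risk_measure d (T : measurableType d) (R : realType)
  (P : probability T R) (rho : (T -> R) -> \bar R) : Prop :=
  [/\
      (forall X Y : T -> R, measurable_fun setT X -> measurable_fun setT Y ->
         (forall w, X w <= Y w) -> (rho Y <= rho X)%E),
      (forall (X : T -> R) (m : R), measurable_fun setT X ->
         rho (fun w => X w + m) = (rho X - m%:E)%E),
      (forall (X : T -> R) (l : R), measurable_fun setT X -> 0 <= l ->
         rho (fun w => l * X w) = (l%:E * rho X)%E) &
      (forall X Y : T -> R, measurable_fun setT X -> measurable_fun setT Y ->
         (forall A : set R, measurable A -> P (X @^-1` A) = P (Y @^-1` A)) ->
         rho X = rho Y)].

Definition risk_estimator (R : realType) (n : nat) (rhohat : ('I_n -> R) -> R)
  : Prop :=
  (forall (x : 'I_n -> R) (m : R), rhohat (fun i => x i + m) = rhohat x - m) /\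
  (forall (x : 'I_n -> R) (l : R), 0 <= l ->
     rhohat (fun i => l * x i) = l * rhohat x).

Definition est_rv (T : Type) (R : realType) (n : nat)
  (rhohat : ('I_n -> R) -> R) (Xs : 'I_n -> T -> R) : T -> R :=
  fun w => rhohat (fun i => Xs i w).

Definition S (T : Type) (R : realType) (n : nat) (X : T -> R)
  (rhohat : ('I_n -> R) -> R) (Xs : 'I_n -> T -> R) (c : R) : T -> R :=
  fun w => X w + c * est_rv rhohat Xs w.

(* c*_F = inf {c > 0 : rho(S(c)) <= 0}, with inf of the empty set = +oo. *)
Definition cstar (T : Type) (R : realType) (n : nat)
  (rho : (T -> R) -> \bar R) (X : T -> R)
  (rhohat : ('I_n -> R) -> R) (Xs : 'I_n -> T -> R) : \bar R :=
  ereal_inf [set c%:E | c in [set c : R | 0 < c /\ (rho (S X rhohat Xs c) <= 0)%E]].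

Definition joint_family (T : Type) (R : realType) (n : nat) (X : T -> R)
  (Xs : 'I_n -> T -> R) : option 'I_n -> T -> R :=
  fun o => match o with None => X | Some i => Xs i end.

(* Main.v *)
Require Import Defs.
From HB Require Import structures.
From mathcomp Require Import all_boot all_order all_algebra.
From mathcomp Require Import all_classical all_reals all_analysis ess_sup_inf.
From mathcomp Require Import lra ring.
Import Order.TTheory GRing.Theory Num.Theory.
Import numFieldNormedType.Exports.
Local Open Scope classical_set_scope.
Local Open Scope ring_scope.

Lemma ae_law (R : realType) (d : measure_display) (T : measurableType d)
  (P : probability T R) (U V : T -> R) :
  measurable_fun setT U -> measurable_fun setT V ->
  {ae P, forall w, U w = V w} ->
  forall A : set R, measurable A -> P (U @^-1` A) = P (V @^-1` A).
Proof.
move=> mU mV [N [mN PN0 sN]] A mA.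
have mUA : measurable (U @^-1` A) by rewrite -[_ @^-1` _]setTI; exact: mU.
have mVA : measurable (V @^-1` A) by rewrite -[_ @^-1` _]setTI; exact: mV.
rewrite -(measureU0 mUA mN PN0) -(measureU0 mVA mN PN0); congr (P _).
apply/seteqP; split => w /=.
- case=> [UA|]; last by right.
  have [eq|neq] := eqVneq (U w) (V w); first by left; rewrite /= -eq.
  by right; apply: sN => /= /eqP; rewrite (negbTE neq).
- case=> [VA|]; last by right.
  have [eq|neq] := eqVneq (U w) (V w); first by left; rewrite /= eq.
  by right; apply: sN => /= /eqP; rewrite (negbTE neq).
Qed.

Lemma rho_ae_mono (R : realType) (d : measure_display) (T : measurableType d)
  (P : probability T R) (rho : (T -> R) -> \bar R) (U V : T -> R) :
  monetary_risk_measure P rho ->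
  measurable_fun setT U -> measurable_fun setT V ->
  {ae P, forall w, U w <= V w} -> (rho V <= rho U)%E.
Proof.
move=> [mono _ _ linv] mU mV hUV.
have mW : measurable_fun setT (U \max V) by exact: measurable_realfun.measurable_maxr.
have -> : rho V = rho (U \max V).
  apply: linv => //; apply: ae_law => //.
  by apply: filterS hUV => w /= h; rewrite (max_idPr h).
by apply: mono => // w /=; rewrite le_max lexx.
Qed.

Theorem mainTheorem2 (R : realType) (d : measure_display) (T : measurableType d)
  (P : probability T R) (F : probability R R) (n : nat)
  (X : T -> R) (Xs : 'I_n -> T -> R)
  (rho : (T -> R) -> \bar R) (rhohat : ('I_n -> R) -> R) :
  measurable_fun setT X ->
  (forall i, measurable_fun setT (Xs i)) ->
  mutually_independent P (joint_family X Xs) ->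
  has_law P X F ->
  (forall i, has_law P (Xs i) F) ->
  monetary_risk_measure P rho ->
  risk_estimator rhohat ->
  measurable_fun setT (est_rv rhohat Xs) ->
  (exists M : R, {ae P, forall w, `|est_rv rhohat Xs w| <= M}) ->
  {ae P, forall w, 0 <= est_rv rhohat Xs w} ->
  (forall c : R, 0 <= c -> rho (S X rhohat Xs c) \is a fin_num) ->
  [/\ (forall c c' : R, 0 <= c -> c <= c' ->
         (rho (S X rhohat Xs c') <= rho (S X rhohat Xs c))%E),
      {within `[0, +oo[, continuous (fun c : R => fine (rho (S X rhohat Xs c)))},
      (forall c c' : R, 0 <= c -> 0 <= c' ->
         (`|rho (S X rhohat Xs c) - rho (S X rhohat Xs c')|
           <= `|c - c'|%:E * ess_sup P (fun w => (`|est_rv rhohat Xs w|)%:E))%E) &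
      ((0 < cstar rho X rhohat Xs < +oo)%E ->
         rho (S X rhohat Xs (fine (cstar rho X rhohat Xs))) = 0%E)].
Proof.
move=> mX mXs _ _ _ hrho _ mE [M hM] hpos hfin.
have hrho' := hrho; case: hrho' => _ cash _ _.
set E := est_rv rhohat Xs in mE hM hpos *.
have mS c : measurable_fun setT (S X rhohat Xs c).
  exact: (measurable_realfun.measurable_funD mX
           (measurable_realfun.measurable_funM (measurable_cst c) mE)).
have P0 : (0 < P setT)%E by rewrite probability_setT lte01.
have [k [k0 essk]] : exists k, 0 <= k /\
    ess_sup P (fun w => (`|E w|)%:E) = k%:E.
  have lo : (0 <= ess_sup P (fun w => (`|E w|)%:E))%E.
    by apply: ess_sup_gee => //; apply: nearW => w; rewrite lee_fin.
  have hi : (ess_sup P (fun w => (`|E w|)%:E) <= M%:E)%E.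
    by apply/ess_supP; apply: filterS hM => w; rewrite lee_fin.
  exists (fine (ess_sup P (fun w => (`|E w|)%:E))).
  have fn : ess_sup P (fun w => (`|E w|)%:E) \is a fin_num.
    by rewrite ge0_fin_numE // (le_lt_trans hi) ?ltry.
  by rewrite fineK // fine_ge0.
have hk : {ae P, forall w, `|E w| <= k}.
  by apply: filterS (ess_sup_ge P (fun w => (`|E w|)%:E)) => w; rewrite essk lee_fin.
pose f c := fine (rho (S X rhohat Xs c)).
have fE c : 0 <= c -> rho (S X rhohat Xs c) = (f c)%:E.
  by move=> c0; rewrite fineK // hfin.
have mono c c' : 0 <= c -> c <= c' ->
    (rho (S X rhohat Xs c') <= rho (S X rhohat Xs c))%E.
  move=> c0 cc'; apply: rho_ae_mono; [exact: hrho|exact: mS|exact: mS|].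
  apply: filterS hpos => w Ew; rewrite /S lerD2l.
  by rewrite ler_wpM2r.
have key c c' : 0 <= c -> c <= c' -> f c' <= f c /\ f c - (c' - c) * k <= f c'.
  move=> c0 cc'; have c'0 : 0 <= c' by exact: le_trans cc'.
  split; first by rewrite -lee_fin -fE // -fE // mono.
  have h1 : (rho (fun w => (S X rhohat Xs c w + (c' - c) * k)%R)
              <= rho (S X rhohat Xs c'))%E.
    apply: rho_ae_mono; [exact: hrho|exact: mS| |].
      exact: (measurable_realfun.measurable_funD (mS c) (measurable_cst _)).
    apply: filterS hk => w Ek; rewrite /S -addrA lerD2l.
    have -> : c' * E w = c * E w + (c' - c) * E w by rewrite mulrBl addrCA subrr addr0.
    rewrite lerD2l ler_wpM2l ?subr_ge0 //.
    by apply: le_trans Ek; exact: ler_norm.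
  by move: h1; rewrite cash // !fE // -EFinB lee_fin.
have lip c c' : 0 <= c -> 0 <= c' -> `|f c - f c'| <= `|c - c'| * k.
  move=> c0 c'0; have [cc'|c'c] := leP c c'.
    have [h1 h2] := key c c' c0 cc'.
    rewrite [`|c - c'|]distrC (ger0_norm (x := c' - c)) ?subr_ge0 // ler_norml.
    apply/andP; split; lra.
  have [h1 h2] := key c' c c'0 (ltW c'c).
  rewrite (ger0_norm (x := c - c')) ?subr_ge0 ?(ltW c'c) // ler_norml.
  apply/andP; split; lra.
split.
- exact: mono.
- pose g c := f (Num.max c 0).
  have gcont : continuous g.
    move=> x; apply/cvgrPdist_le => e e0.
    have ek : 0 < e / (k + 1) by rewrite divr_gt0 // ltr_wpDl.
    apply/nbhs_normP; exists (e / (k + 1)) => //= y xy.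
    rewrite /ball_ /= in xy.
    have hab : `|Num.max x 0 - Num.max y 0| <= `|x - y|.
      have n1 := ler_norm (x - y).
      have n2 : - (x - y) <= `|x - y| by rewrite -normrN ler_norm.
      rewrite ler_norml.
      have [hx|hx] := leP x 0; have [hy|hy] := leP y 0;
        rewrite ?(max_r hx) ?(max_r hy) ?(max_l (ltW hx)) ?(max_l (ltW hy));
        apply/andP; split; lra.
    apply: (le_trans (lip _ _ _ _)); rewrite ?le_max ?lexx ?orbT //.
    apply: (le_trans (ler_wpM2r k0 hab)).
    apply: (le_trans (ler_wpM2r k0 (ltW xy))).
    rewrite mulrAC ler_pdivrMr ?ltr_wpDl //; nra.
  apply: (subspace_eq_continuous (f := g)); last exact: continuous_subspaceT.
  move=> c; rewrite inE /= in_itv /= andbT => c0.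
  by rewrite /g (max_l c0).
- move=> c c' c0 c'0; rewrite fE // fE // essk -EFinB /= -EFinM lee_fin.
  exact: lip.
- case/andP => cs0 csoo.
  set Z := [set c%:E | c in [set c : R | 0 < c /\ (rho (S X rhohat Xs c) <= 0)%E]].
  have csE : cstar rho X rhohat Xs = ereal_inf Z by [].
  have csfin : cstar rho X rhohat Xs \is a fin_num.
    by rewrite fin_numE gt_eqF ?lt_eqF // (lt_trans _ cs0) ?ltNy0.
  set r := fine (cstar rho X rhohat Xs).
  have rE : cstar rho X rhohat Xs = r%:E by rewrite fineK.
  have r0 : 0 < r by rewrite -lte_fin -rE.
  have lb c : 0 < c -> f c <= 0 -> r <= c.
    move=> c0 fc; rewrite -lee_fin -rE csE; apply: ereal_inf_lbound.
    by exists c => //; split => //; rewrite (fE c (ltW c0)) lee_fin.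
  have adh e : 0 < e -> exists c, [/\ 0 < c, f c <= 0 & c < r + e].
    have csfin' : ereal_inf Z \is a fin_num by rewrite -csE.
    move=> e0; have [x [c [c0 hc] <-]] := lb_ereal_inf_adherent e0 csfin'.
    rewrite -csE rE -EFinD lte_fin => cr; exists c; split => //.
    by rewrite -lee_fin -(fE c (ltW c0)).
  rewrite fE ?ltW //; congr EFin; apply/eqP; rewrite eq_le; apply/andP; split.
  + rewrite leNgt; apply/negP => fr.
    pose e := f r / (k + 1).
    have e0 : 0 < e by rewrite divr_gt0 // ltr_wpDl.
    have ee : e * k + e = f r by rewrite -{2}(mulr1 e) -mulrDr divfK // gt_eqF // ltr_wpDl.
    have [c [c0 fc cr]] := adh e e0.
    have rc := lb c c0 fc.
    have := lip r c (ltW r0) (ltW c0).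
    rewrite [`|r - c|]distrC (ger0_norm (x := c - r)) ?subr_ge0 // ler_norml => /andP[h1 h2].
    have : (c - r) * k <= e * k by rewrite ler_wpM2r // lerBlDl ltW.
    lra.
  + rewrite leNgt; apply/negP => fr.
    pose u := - f r / (k + 1).
    have u0 : 0 < u by rewrite divr_gt0 ?oppr_gt0 // ltr_wpDl.
    have uu : u * k + u = - f r by rewrite -{2}(mulr1 u) -mulrDr divfK // gt_eqF // ltr_wpDl.
    pose t := Num.min (r / 2) u.
    have t0 : 0 < t by rewrite lt_min u0 divr_gt0.
    have tr : t <= r / 2 by rewrite ge_min lexx.
    have tu : t <= u by rewrite ge_min lexx orbT.
    have c0 : 0 < r - t by lra.
    have := lip (r - t) r (ltW c0) (ltW r0).
    rewrite (ler0_norm (x := r - t - r)) ?ler_norml; last by lra.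
    move=> /andP[h1 h2].
    have : t * k <= u * k by rewrite ler_wpM2r.
    have : - (r - t - r) * k = t * k by ring.
    move=> tk tuk.
    have fc : f (r - t) <= 0 by lra.
    have := lb _ c0 fc; lra.
Qed.
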